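(* Let $1\le k\le n-1$ and let $T$ be a tableau of shape $k\times(n-k)$. Then there is a unique multiset $\varphi_{NN}(T)$ of pairwise nonnesting vectors in $V^*_{k,n}$ whose summing tableau is $T$, and there is a unique multiset $\varphi_{NC}(T)$ of pairwise noncrossing vectors in $V^*_{k,n}$ whose summing tableau is $T$. (Equal vectors are considered both nonnesting and noncrossing with each other.)
   Context: $V_{k,n}$ denotes the set of integer vectors $I=(i_1,\dots,i_k)$ with $1\le i_1<\dots<i_k\le n$, and $V^*_{k,n}=V_{k,n}\setminus\{(n-k+1,\dots,n)\}$. Two arcs $(p<p')$, $(q<q')$ cross if $p<q<p'<q'$ or $q<p<q'<p'$; they nest if $p<q<q'<p'$ or $q<p<p'<q'$. $I,J\in V_{k,n}$ are noncrossing if for all $1\le a<b\le k$ with $i_\ell=j_\ell$ for all $a<\ell<b$, the arcs $(i_a<i_b)$ and $(j_a<j_b)$ do not cross; they are nonnesting if for all $1\le a<b\le k$ these arcs do not nest (equivalently $I\le J$ or $J\le I$ componentwise). A tableau of shape $k\times(n-k)$ is an array $T=(t_{a,b})_{a\in[k],b\in[n-k]}$ of nonnegative integers with $t_{a,b}\le t_{a,b+1}$ and $t_{a+1,b}\le t_{a,b}$ (rows indexed from top to bottom). The summing tableau of a finite multiset $L$ of vectors in $V_{k,n}$ is $t_{a,b}=\#\{I\in L : i_a\le a+b-1\}$ (counted with multiplicity); equivalently it is $\sum_{I\in L}\chi_I$ where $(\chi_I)_{a,b}=1$ if $i_a\le a+b-1$ and $0$ otherwise. *)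

(* Defs.v *)
From mathcomp Require Import all_boot.
Set Implicit Arguments. Unset Strict Implicit. Unset Printing Implicit Defensive.

(* Vectors I = (i_1,...,i_k) are represented as sequences of nats
   [:: i_1; ...; i_k] (entries 1-based values as in the paper);
   the paper's index a (1-based) corresponds to position a-1 (nth 0 I (a-1)). *)

Definition inV (k n : nat) (I : seq nat) : bool :=
  [&& size I == k, sorted ltn I & all (fun x => 0 < x <= n) I].

Definition inVstar (k n : nat) (I : seq nat) : bool :=
  inV k n I && (I != iota (n - k + 1) k).

Definition arcs_cross (p p' q q' : nat) : bool :=
  ((p < q) && (q < p') && (p' < q')) || ((q < p) && (p < q') && (q' < p')).
Definition arcs_nest (p p' q q' : nat) : bool :=
  ((p < q) && (q < q') && (q' < p')) || ((q < p) && (p < p') && (p' < q')).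

Definition noncrossing (k : nat) (I J : seq nat) : Prop :=
  forall a b, a < b -> b < k ->
    (forall l, a < l -> l < b -> nth 0 I l = nth 0 J l) ->
    ~~ arcs_cross (nth 0 I a) (nth 0 I b) (nth 0 J a) (nth 0 J b).

Definition nonnesting (k : nat) (I J : seq nat) : Prop :=
  forall a b, a < b -> b < k ->
    ~~ arcs_nest (nth 0 I a) (nth 0 I b) (nth 0 J a) (nth 0 J b).

(* Tableau of shape k x (n-k): T a b for 0-based a < k, b < n-k
   (paper's t_{a+1,b+1}); weakly increasing along rows,
   weakly decreasing down columns. Entries are nats (nonnegative). *)
Definition is_tableau (k n : nat) (T : nat -> nat -> nat) : Prop :=
  (forall a b, a < k -> b.+1 < n - k -> T a b <= T a b.+1) /\
  (forall a b, a.+1 < k -> b < n - k -> T a.+1 b <= T a b).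

(* Summing tableau of a multiset L (a seq, counted with multiplicity):
   paper t_{a,b} = #{I in L : i_a <= a+b-1}; in 0-based a,b this is
   #{I in L : nth 0 I a <= a + b + 1}. *)
Definition summing_tableau (L : seq (seq nat)) (a b : nat) : nat :=
  count (fun I => nth 0 I a <= a + b + 1) L.

Definition represents (R : seq nat -> seq nat -> Prop) (k n : nat)
    (T : nat -> nat -> nat) (L : seq (seq nat)) : Prop :=
  [/\ all (inVstar k n) L,
      (forall I J, I \in L -> J \in L -> R I J) &
      (forall a b, a < k -> b < n - k -> summing_tableau L a b = T a b)].

Definition exists_unique_multiset (P : seq (seq nat) -> Prop) : Prop :=
  exists L, P L /\ (forall L', P L' -> perm_eq L L').

(* Main.v *)
Require Import Defs.
From mathcomp Require Import all_boot zify.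
From Stdlib Require Import Classical.
Set Implicit Arguments. Unset Strict Implicit. Unset Printing Implicit Defensive.

Lemma sorted_nth_lt (s : seq nat) i j :
  sorted ltn s -> i < j -> j < size s -> nth 0 s i < nth 0 s j.
Proof.
move=> hs hij hj.
have := @sorted_ltn_nth _ ltn ltn_trans 0 s hs i j.
rewrite !inE; apply => //; exact: ltn_trans hij hj.
Qed.

Lemma inV_P k n I :
  inV k n I <-> [/\ size I = k, (forall i j, i < j -> j < k -> nth 0 I i < nth 0 I j)
                  & (forall i, i < k -> 0 < nth 0 I i <= n)].
Proof.
rewrite /inV; split.
  case/and3P => /eqP hs ho /(all_nthP 0) ha; split => //.
    by move=> i j hij hj; apply: sorted_nth_lt => //; rewrite hs.
  by move=> i hi; apply: ha; rewrite hs.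
case=> hs ho ha; apply/and3P; split; first by rewrite hs.
  by apply/(sortedP 0) => i hi; apply: ho; rewrite -?hs //.
by apply/(all_nthP 0) => i hi; apply: ha; rewrite -hs.
Qed.

Lemma incr_add (f : nat -> nat) k i j :
  (forall i j, i < j -> j < k -> f i < f j) -> i <= j -> j < k -> f i + (j - i) <= f j.
Proof.
move=> ho hij hj; elim: j hij hj => [|j IH] hij hj.
  by move: hij; rewrite leqn0 => /eqP ->; rewrite addn0.
case: (ltnP i j.+1) => h; last first.
  have e : i = j.+1 by lia.
  by rewrite e subnn addn0.
have e1 : i <= j by lia.
have e2 : j < k by lia.
have := IH e1 e2; have := ho j j.+1 (ltnSn j) hj; lia.
Qed.

Lemma inV_bounds k n I a : inV k n I -> a < k -> a < nth 0 I a <= n - k + a + 1.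
Proof.
case/inV_P => hs ho ha hak.
have h1 := incr_add ho (leq0n a) hak.
have e1 : a <= k.-1 by lia.
have e2 : k.-1 < k by lia.
have e3 : 0 < k by lia.
have h2 := incr_add ho e1 e2.
have := ha 0 e3; have := ha k.-1 e2. lia.
Qed.

Lemma inVstar_first k n I : 1 <= k -> inVstar k n I -> nth 0 I 0 <= n - k.
Proof.
move=> hk /andP [hI hne]; rewrite leqNgt; apply/negP => h0.
move/negP: hne; apply; apply/eqP.
move/inV_P: (hI) => [hs ho ha].
apply: (@eq_from_nth _ 0); first by rewrite size_iota.
move=> i; rewrite hs => hi; rewrite nth_iota //.
have := incr_add ho (leq0n i) hi; have := inV_bounds hI hi; lia.
Qed.

Definition ext (T : nat -> nat -> nat) (N d a v : nat) :=
  if v <= a then 0 else if v - a.+1 < N then T a (v - a.+1) else d.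

Lemma cnt_ext k n T L a v : k < n -> all (inVstar k n) L ->
  (forall a b, a < k -> b < n - k -> summing_tableau L a b = T a b) -> a < k ->
  count (fun I => nth 0 I a <= v) L = ext T (n - k) (size L) a v.
Proof.
move=> hkn hL hT ha; rewrite /ext.
have hb : forall I, I \in L -> a < nth 0 I a <= n - k + a + 1.
  by move=> I /(allP hL) /andP [hI _]; exact: inV_bounds hI ha.
case: ifP => h1.
  apply/eqP; rewrite -leqn0 leqNgt -has_count; apply/hasPn => I /hb /andP [h h0] /=; rewrite -ltnNge; lia.
case: ifP => h2.
  rewrite -hT // /summing_tableau; apply: eq_count => I /=.
  have -> : a + (v - a.+1) + 1 = v by lia. done.
apply/eqP; rewrite -all_count; apply/allP => I /hb /andP [h h0] /=; lia.
Qed.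

Lemma size_sum k n T L : 1 <= k -> k < n -> all (inVstar k n) L ->
  (forall a b, a < k -> b < n - k -> summing_tableau L a b = T a b) ->
  size L = T 0 (n - k - 1).
Proof.
move=> hk hkn hL hT; rewrite -hT; try lia.
apply/esym/eqP; rewrite /summing_tableau -all_count; apply/allP => I /(allP hL) hI.
have := inVstar_first hk hI; rewrite /= => h; lia.
Qed.

Lemma tab_row k n T a b b' : is_tableau k n T -> a < k -> b <= b' -> b' < n - k -> T a b <= T a b'.
Proof.
case=> hr _ ha; elim: b' => [|b' IH] hb hb'.
  by move: hb; rewrite leqn0 => /eqP ->.
case: (ltnP b b'.+1) => h; last by have -> : b = b'.+1 by lia.
have e1 : b <= b' by lia. have e2 : b' < n - k by lia.
have := IH e1 e2; have := hr a b' ha hb'; lia.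
Qed.

Lemma tab_col k n T a a' b : is_tableau k n T -> a <= a' -> a' < k -> b < n - k -> T a' b <= T a b.
Proof.
case=> _ hc; elim: a' => [|a' IH] ha ha' hb.
  by move: ha; rewrite leqn0 => /eqP ->.
case: (ltnP a a'.+1) => h; last by have -> : a = a'.+1 by lia.
have e1 : a <= a' by lia. have e2 : a' < k by lia.
have := IH e1 e2 hb; have := hc a' b ha' hb; lia.
Qed.

Definition cc (T : nat -> nat -> nat) N a m := find (fun b => m <= T a b) (iota 0 N).
Definition vecNN T N k m := mkseq (fun a => a.+1 + cc T N a m) k.
Definition canon T k n := [seq vecNN T (n - k) k m | m <- iota 1 (T 0 (n - k - 1))].

Lemma cc_size T N a m : cc T N a m <= N.
Proof. by rewrite /cc; have := find_size (fun b => m <= T a b) (iota 0 N); rewrite size_iota. Qed.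

Lemma cc_le k n T a m b : is_tableau k n T -> a < k -> b < n - k ->
  (cc T (n - k) a m <= b) = (m <= T a b).
Proof.
move=> hT ha hb; apply/idP/idP => h.
  have hc : cc T (n-k) a m < size (iota 0 (n-k)) by rewrite size_iota; lia.
  move: (hc); rewrite /cc -has_find => /(nth_find 0); rewrite -/(cc T (n-k) a m).
  rewrite nth_iota; last by rewrite size_iota in hc.
  rewrite add0n => h2; apply: leq_trans h2 _; apply: (tab_row hT) => //.
rewrite leqNgt; apply/negP => hc.
have := before_find 0 hc; rewrite nth_iota // add0n h //.
Qed.

Lemma cc_mono_a k n T a a' m : is_tableau k n T -> a <= a' -> a' < k ->
  cc T (n - k) a m <= cc T (n - k) a' m.
Proof.
move=> hT haa ha'.
have := cc_size T (n-k) a' m; rewrite leq_eqVlt => /orP [/eqP ->|h]; first exact: cc_size.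
rewrite (cc_le _ _ _ h) //; last by lia.
have := (cc_le m hT ha' h); rewrite leqnn => /esym h1.
apply: leq_trans h1 (tab_col hT haa ha' h).
Qed.

Lemma cc_mono_m k n T a m m' : is_tableau k n T -> a < k -> m <= m' ->
  cc T (n - k) a m <= cc T (n - k) a m'.
Proof.
move=> hT ha hmm.
have := cc_size T (n-k) a m'; rewrite leq_eqVlt => /orP [/eqP ->|h]; first exact: cc_size.
rewrite (cc_le _ _ _ h) //.
have := (cc_le m' hT ha h); rewrite leqnn => /esym h1; exact: leq_trans hmm h1.
Qed.

Lemma count_le_iota x d : x <= d -> count (fun m => m <= x) (iota 1 d) = x.
Proof.
move=> h; have -> : d = x + (d - x) by lia.
rewrite iotaD count_cat.
rewrite (_ : count _ (iota 1 x) = x); last first.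
  apply/eqP; rewrite -{3}(size_iota 1 x) -all_count; apply/allP => y; rewrite mem_iota; lia.
rewrite (_ : count _ (iota _ _) = 0) ?addn0 //.
apply/eqP; rewrite -leqn0 leqNgt -has_count; apply/hasPn => y; rewrite mem_iota /=; lia.
Qed.

Lemma canon_rep k n T : 1 <= k -> k < n -> is_tableau k n T ->
  represents (nonnesting k) k n T (canon T k n).
Proof.
move=> hk hkn hT; set d := T 0 (n - k - 1).
have hd : forall a b, a < k -> b < n - k -> T a b <= d.
  move=> a b ha hb.
  have e1 : b <= n - k - 1 by lia. have e2 : n - k - 1 < n - k by lia.
  apply: leq_trans (tab_row hT ha e1 e2) _.
  exact: (tab_col hT (leq0n a) ha).
have nthv : forall m a, a < k -> nth 0 (vecNN T (n-k) k m) a = a.+1 + cc T (n-k) a m.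
  by move=> m a ha; rewrite nth_mkseq.
split.
- apply/allP => I /mapP [m]; rewrite mem_iota => hm ->.
  apply/andP; split.
    apply/inV_P; split; first by rewrite size_mkseq.
      move=> i j hij hj; rewrite !nthv //; try lia.
      have := cc_mono_a m hT (ltnW hij) hj; lia.
    move=> i hi; rewrite nthv //; have := cc_size T (n-k) i m; lia.
  apply/negP => /eqP he.
  have := nthv m 0 hk; rewrite he nth_iota // => h0.
  have e2 : n - k - 1 < n - k by lia.
  have := cc_le m hT hk e2; rewrite -/d.
  have -> : m <= d by lia.
  lia.
- move=> I J /mapP [m]; rewrite mem_iota => hm -> /mapP [m']; rewrite mem_iota => hm' ->.
  move=> a b hab hb; rewrite !nthv //; try lia.
  rewrite /arcs_nest; case: (leqP m m') => hmm.
    have := cc_mono_m hT (ltn_trans hab hb) hmm; have := cc_mono_m hT hb hmm; lia.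
  have hmm' : m' <= m by lia.
  have := cc_mono_m hT (ltn_trans hab hb) hmm'; have := cc_mono_m hT hb hmm'; lia.
- move=> a b ha hb; rewrite /summing_tableau count_map.
  rewrite -[RHS](count_le_iota (hd a b ha hb)); apply: eq_count => m /=.
  rewrite nthv // -(cc_le m hT ha hb); lia.
Qed.

Definition cw k (I J : seq nat) := all (fun a => nth 0 I a <= nth 0 J a) (iota 0 k).

Lemma cwP k I J a : cw k I J -> a < k -> nth 0 I a <= nth 0 J a.
Proof. by move=> /allP h ha; apply: h; rewrite mem_iota. Qed.

Lemma cw_trans k : transitive (cw k).
Proof.
move=> J I K h1 h2; apply/allP => a; rewrite mem_iota add0n => ha.
by apply: leq_trans (cwP h1 ha) (cwP h2 ha).
Qed.

Lemma nn_total k n I J : inV k n I -> inV k n J -> nonnesting k I J -> cw k I J || cw k J I.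
Proof.
move=> /inV_P [hsI hoI _] /inV_P [hsJ hoJ _] hnn.
apply/negPn/negP; rewrite negb_or => /andP [/allPn [a ha h1] /allPn [b hb h2]].
move: ha hb h1 h2; rewrite !mem_iota !add0n /= -!ltnNge => ha hb h1 h2.
case: (ltngtP a b) => hab.
- have := hnn a b hab hb; rewrite /arcs_nest.
  have := hoI a b hab hb; have := hoJ a b hab hb; lia.
- have := hnn b a hab ha; rewrite /arcs_nest.
  have := hoI b a hab ha; have := hoJ b a hab ha; lia.
- subst; lia.
Qed.

Lemma sorted_count (s : seq nat) j v : sorted leq s -> j < size s ->
  (nth 0 s j <= v) = (j < count (fun x => x <= v) s).
Proof.
elim: s j => [|x s IH] j //= hs hj.
have hall := order_path_min leq_trans hs.
have hs' := path_sorted hs.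
have c0 : v < x -> count (fun x => x <= v) s = 0.
  move=> hv; apply/eqP; rewrite -leqn0 leqNgt -has_count; apply/hasPn => y hy /=.
  have := allP hall y hy; rewrite /= => h; lia.
case: j hj => [|j] hj /=.
  case: (leqP x v) => h //=; by rewrite c0.
rewrite IH //; case: (leqP x v) => h /=; first by rewrite add1n ltnS.
all: try (rewrite c0 // add0n; apply/negbTE; rewrite -ltnNge;
  have := allP hall (nth 0 s j) (mem_nth 0 hj); rewrite /= => h2; lia).
Qed.

Lemma nat_eq_le x y N : x <= N -> y <= N -> (forall b, b < N -> (x <= b) = (y <= b)) -> x = y.
Proof.
move=> hx hy h; apply/eqP; rewrite eqn_leq; apply/andP; split; rewrite leqNgt; apply/negP => hxy.
  have e : y < N by lia.
  by have := h y e; rewrite leqnn leqNgt hxy.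
have e : x < N by lia.
by have := h x e; rewrite leqnn; move/esym; rewrite leqNgt hxy.
Qed.

Lemma canon_uniq k n T L : 1 <= k -> k < n -> is_tableau k n T ->
  represents (nonnesting k) k n T L -> perm_eq (canon T k n) L.
Proof.
move=> hk hkn hT [hL hnn hsum].
have hV : forall I, I \in L -> inV k n I by move=> I /(allP hL) /andP [].
set S := sort (cw k) L.
have hSL : perm_eq S L by rewrite perm_sort.
have hS : sorted (cw k) S.
  apply: (@sort_sorted_in _ (mem L)); last by apply/allP.
  by move=> I J hI hJ; apply: nn_total (hV _ hI) (hV _ hJ) (hnn _ _ hI hJ).
have hsz := size_sum hk hkn hL hsum.
suff -> : canon T k n = S by rewrite hSL.
apply: (@eq_from_nth _ [::]).
  by rewrite size_map size_iota (perm_size hSL).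
rewrite size_map size_iota => j hj.
have hjS : j < size S by rewrite (perm_size hSL) hsz.
have hmem : nth [::] S j \in L by rewrite -(perm_mem hSL) mem_nth.
rewrite (nth_map 0) ?size_iota // nth_iota // add1n.
have hVj := hV _ hmem.
apply: (@eq_from_nth _ 0); first by rewrite size_mkseq; case/inV_P: hVj.
rewrite size_mkseq => a ha; rewrite nth_mkseq //.
set x := nth 0 (nth [::] S j) a.
have hx := inV_bounds hVj ha.
have hsa : sorted leq [seq nth 0 u a | u <- S].
  rewrite sorted_map; apply: sub_sorted hS => I J h; exact: cwP h ha.
suff : x - a.+1 = cc T (n - k) a j.+1 by rewrite /x; lia.
apply: (@nat_eq_le _ _ (n - k)); [lia| exact: cc_size |] => b hb.
rewrite (cc_le _ hT ha hb) -hsum //.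
have -> : (x - a.+1 <= b) = (x <= a + b + 1) by lia.
rewrite /x -(nth_map [::] 0 (fun u => nth 0 u a) hjS) sorted_count ?size_map //.
rewrite count_map /summing_tableau (permP hSL); by [].
Qed.

Definition prec K (I J : seq nat) := exists a, [/\ a < K,
  (forall l, a < l -> l < K -> nth 0 I l = nth 0 J l) & nth 0 I a < nth 0 J a].
Definition CC K (I J : seq nat) :=
  prec K I J -> nth 0 I K <= nth 0 J K.-1 \/ nth 0 J K <= nth 0 I K.

Lemma prec_irr K I : ~ prec K I I.
Proof. by case=> a [_ _]; rewrite ltnn. Qed.

Lemma prec_trans K I J L : prec K I J -> prec K J L -> prec K I L.
Proof.
case=> a [ha hI hIa] [b [hb hJ hJb]].
case: (ltngtP a b) => hab.
- exists b; split => //.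
    move=> l hl hlK; rewrite hI ?hJ //; lia.
  by rewrite hI.
- exists a; split => //.
    move=> l hl hlK; rewrite hI ?hJ //; lia.
  by rewrite -(hJ a).
- subst b; exists a; split => //.
    by move=> l hl hlK; rewrite hI ?hJ.
  exact: ltn_trans hIa hJb.
Qed.

Lemma prec_ext K I J I' J' : (forall l, l < K -> nth 0 I l = nth 0 I' l) ->
  (forall l, l < K -> nth 0 J l = nth 0 J' l) -> prec K I J -> prec K I' J'.
Proof.
move=> eI eJ [a [ha h hIa]]; exists a; split => //.
  by move=> l hl hlK; rewrite -eI // -eJ // h.
by rewrite -eI // -eJ.
Qed.

Lemma prec_total K I J : prec K I J \/ prec K J I \/ (forall l, l < K -> nth 0 I l = nth 0 J l).
Proof.
suff : forall j, j <= K -> (forall l, K - j <= l -> l < K -> nth 0 I l = nth 0 J l) \/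
   prec K I J \/ prec K J I.
  move/(_ K (leqnn K)); rewrite subnn => [[h|[h|h]]]; [right; right|left|right; left] => //.
  by move=> l; apply: h.
elim=> [|j IH] hj.
  by left => l; lia.
case: (IH (ltnW hj)) => [h|]; last by right.
have hl : K - j.+1 < K by lia.
case: (ltngtP (nth 0 I (K - j.+1)) (nth 0 J (K - j.+1))) => hc.
- right; left; exists (K - j.+1); split => // l h1 h2; apply: h => //; lia.
- right; right; exists (K - j.+1); split => // l h1 h2; symmetry; apply: h => //; lia.
- left => l h1 h2; case: (ltnP l (K - j)) => h3; last by apply: h.
  have -> : l = K - j.+1 by lia. done.
Qed.

Lemma take_eq K (I J : seq nat) : K <= size I -> K <= size J ->
  (forall l, l < K -> nth 0 I l = nth 0 J l) -> take K I = take K J.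
Proof.
move=> hI hJ h; apply: (@eq_from_nth _ 0); first by rewrite !size_takel.
rewrite size_takel // => l hl.
by rewrite !nth_take // h.
Qed.

Lemma vec_eq K (I J : seq nat) : size I = K.+1 -> size J = K.+1 ->
  take K I = take K J -> nth 0 I K = nth 0 J K -> I = J.
Proof.
move=> hI hJ ht hn.
rewrite -(take_size I) -(take_size J) hI hJ !(take_nth 0) ?hI ?hJ //.
by rewrite ht hn.
Qed.

Lemma exists_min (T : eqType) (s : seq T) (f : T -> nat) x0 : x0 \in s ->
  exists2 x, x \in s & forall y, y \in s -> f x <= f y.
Proof.
elim: s x0 => [//|z s IH] x0 hx0.
case: s IH hx0 => [|w s] IH hx0.
  exists z; first by rewrite mem_head.
  by move=> y; rewrite inE => /eqP ->.
case: (IH w (mem_head _ _)) => x hx hmin.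
case: (leqP (f z) (f x)) => h.
  exists z; first by rewrite mem_head.
  move=> y; rewrite inE => /orP [/eqP -> //|/hmin]; exact: leq_trans h.
exists x; first by rewrite inE hx orbT.
move=> y; rewrite inE => /orP [/eqP -> |/hmin //]; exact: ltnW.
Qed.

Lemma exists_max K (s : seq (seq nat)) x0 : x0 \in s ->
  exists2 x, x \in s & forall y, y \in s -> ~ prec K x y.
Proof.
elim: s x0 => [//|z s IH] x0 hx0.
case: s IH hx0 => [|w s] IH hx0.
  exists z; first by rewrite mem_head.
  by move=> y; rewrite inE => /eqP ->; apply: prec_irr.
case: (IH w (mem_head _ _)) => x hx hmax.
case: (classic (prec K x z)) => h.
  exists z; first by rewrite mem_head.
  move=> y; rewrite inE => /orP [/eqP -> |hy]; first exact: prec_irr.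
  move=> hzy; apply: (hmax y hy); exact: prec_trans h hzy.
exists x; first by rewrite inE hx orbT.
by move=> y; rewrite inE => /orP [/eqP -> |/hmax].
Qed.

Definition good K (L : seq (seq nat)) :=
  forall I, I \in L -> size I = K.+1 /\ nth 0 I K.-1 < nth 0 I K.
Definition pairCC K (L : seq (seq nat)) := forall I J, I \in L -> J \in L -> CC K I J.

Lemma key_claim K L m J1 : 1 <= K -> good K L -> pairCC K L ->
  (forall I, I \in L -> m <= nth 0 I K) -> (exists2 I0, I0 \in L & nth 0 I0 K = m) ->
  J1 \in L -> nth 0 J1 K.-1 < m -> (forall I, I \in L -> nth 0 I K.-1 < m -> ~ prec K J1 I) ->
  exists2 X, X \in L & take K X = take K J1 /\ nth 0 X K = m.
Proof.
move=> hK hg hc hm [I0 hI0 hI0m] hJ1 hJ1m hmax.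
have := hm _ hJ1; rewrite leq_eqVlt => /orP [/eqP e|hlt].
  by exists J1.
have [s0 l0] := hg _ hI0; have [s1 l1] := hg _ hJ1.
case: (prec_total K I0 J1) => [h|[h|h]].
- exfalso; case: (hc _ _ hI0 hJ1 h) => h2; lia.
- exfalso; apply: (hmax _ hI0 _ h); lia.
- exists I0 => //; split => //; apply: take_eq; [by rewrite s0|by rewrite s1|exact: h].
Qed.

Lemma count_rem_eq (T : eqType) (L : seq T) X (P : pred T) : X \in L ->
  count P (rem X L) = count P L - P X.
Proof. by move=> h; rewrite count_rem h. Qed.

Lemma NC_uniq_step K : 1 <= K -> forall L L', good K L -> good K L' ->
  pairCC K L -> pairCC K L' ->
  perm_eq (map (take K) L) (map (take K) L') ->
  (forall v, count (fun I => nth 0 I K <= v) L = count (fun I => nth 0 I K <= v) L') ->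
  perm_eq L L'.
Proof.
move=> hK L; move Hs: (size L) => s; elim: s L Hs => [|s IH] L Hs L' hg hg' hc hc' hp hcnt.
  have := perm_size hp; rewrite !size_map Hs => /esym/size0nil ->; by move/size0nil: Hs ->.
case: L Hs hg hc hp hcnt => [//|I1 L1] Hs hg hc hp hcnt.
set L := I1 :: L1.
have [I0 hI0 hmin] := exists_min (fun I => nth 0 I K) (mem_head I1 L1).
set m := nth 0 I0 K.
have hm : forall I, I \in L -> m <= nth 0 I K by [].
have hm' : forall I, I \in L' -> m <= nth 0 I K.
  move=> I hI; rewrite leqNgt; apply/negP => hlt.
  have := hcnt (nth 0 I K); rewrite (_ : count _ L = 0).
    move/esym/eqP; rewrite -leqn0 leqNgt -has_count => /hasP; apply; exists I => //.
  apply/eqP; rewrite -leqn0 leqNgt -has_count; apply/hasPn => J /hm /=; lia.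
have hex' : exists2 I0', I0' \in L' & nth 0 I0' K = m.
  have : 0 < count (fun I => nth 0 I K <= m) L' .
    rewrite -hcnt -has_count; apply/hasP; exists I0 => //.
  rewrite -has_count => /hasP [I hI hIm]; exists I => //.
  by apply/eqP; rewrite eqn_leq hIm hm'.
have hI0m : nth 0 I0 K.-1 < m by case: (hg _ hI0).
set S := [seq I <- L | nth 0 I K.-1 < m].
have hI0S : I0 \in S by rewrite mem_filter hI0m.
have [J hJS hJmax] := exists_max K hI0S.
move: hJS; rewrite mem_filter => /andP [hJm hJL].
have hmaxL : forall I, I \in L -> nth 0 I K.-1 < m -> ~ prec K J I.
  by move=> I hI hIm; apply: hJmax; rewrite mem_filter hIm.
have [X hX [hXt hXm]] := key_claim hK hg hc hm (ex_intro2 _ _ I0 hI0 erefl) hJL hJm hmaxL.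
have hJt : take K J \in map (take K) L' by rewrite -(perm_mem hp); apply: map_f.
case/mapP: hJt => J' hJ' hJJ'.
have [sJ _] := hg _ hJL; have [sJ' _] := hg' _ hJ'.
have eJ : forall l, l < K -> nth 0 J l = nth 0 J' l.
  by move=> l hl; rewrite -(nth_take 0 hl J) hJJ' nth_take.
have hJ'm : nth 0 J' K.-1 < m by rewrite -eJ //; lia.
have hmaxL' : forall I, I \in L' -> nth 0 I K.-1 < m -> ~ prec K J' I.
  move=> I hI hIm hpr.
  have : take K I \in map (take K) L by rewrite (perm_mem hp); apply: map_f.
  case/mapP => I2 hI2 hII2.
  have [sI _] := hg' _ hI; have [sI2 _] := hg _ hI2.
  have eI : forall l, l < K -> nth 0 I l = nth 0 I2 l.
    by move=> l hl; rewrite -(nth_take 0 hl I) hII2 nth_take.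
  apply: (hmaxL I2 hI2); first by rewrite -eI //; lia.
  by apply: prec_ext hpr => l hl; rewrite ?eJ ?eI.
have [X' hX' [hX't hX'm]] := key_claim hK hg' hc' hm' hex' hJ' hJ'm hmaxL'.
have eXX' : X = X'.
  have [sX _] := hg _ hX; have [sX' _] := hg' _ hX'.
  by apply: (vec_eq sX sX'); rewrite ?hXt ?hX't ?hXm ?hX'm // -hJJ'.
subst X'.
have pL := perm_to_rem hX; have pL' := perm_to_rem hX'.
have h1 : perm_eq (map (take K) L) (take K X :: map (take K) (rem X L)) by exact: (perm_map (take K) pL).
have h2 : perm_eq (map (take K) L') (take K X :: map (take K) (rem X L')) by exact: (perm_map (take K) pL').
have hpr : perm_eq (map (take K) (rem X L)) (map (take K) (rem X L')).
  rewrite -(perm_cons (take K X)); rewrite perm_sym in h1.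
  exact: perm_trans h1 (perm_trans hp h2).
apply: perm_trans pL _; rewrite perm_sym; apply: perm_trans pL' _.
rewrite perm_sym perm_cons.
apply: IH.
- by rewrite size_rem // Hs.
- by move=> U /mem_rem /hg.
- by move=> U /mem_rem /hg'.
- by move=> U V /mem_rem hU /mem_rem hV; apply: hc.
- by move=> U V /mem_rem hU /mem_rem hV; apply: hc'.
- exact: hpr.
- by move=> v; rewrite !count_rem_eq // hcnt.
Qed.

Lemma NC_exist_step K : 1 <= K -> forall (A : seq nat) (P : seq (seq nat)),
  size A = size P -> (forall p, p \in P -> size p = K) ->
  (forall v, count (fun x => x <= v) A <= count (fun p => nth 0 p K.-1 < v) P) ->
  exists L, [/\ perm_eq (map (take K) L) P, perm_eq (map (fun I => nth 0 I K) L) A,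
             good K L & pairCC K L].
Proof.
move=> hK A; move Hs: (size A) => s; elim: s A Hs => [|s IH] A Hs P hsz hP hH.
  exists [::]; split => //.
  - by move/esym/size0nil: hsz => ->.
  - by move/size0nil: Hs => ->.
case: A Hs hH => [//|a1 A1] Hs hH; set A := a1 :: A1.
have [m hmA hmin] := exists_min id (mem_head a1 A1).
have hex : has (fun p => nth 0 p K.-1 < m) P.
  by rewrite has_count; apply: leq_trans (hH m); rewrite -has_count; apply/hasP; exists m.
set S := [seq p <- P | nth 0 p K.-1 < m].
case/hasP: hex => p0 hp0 hp0m.
have hp0S : p0 \in S by rewrite mem_filter hp0m.
have [J hJS hJmax] := exists_max K hp0S.
move: hJS; rewrite mem_filter => /andP [hJm hJP].
have [L0 [h1 h2 h3 h4]] : exists L, [/\ perm_eq (map (take K) L) (rem J P),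
    perm_eq (map (fun I => nth 0 I K) L) (rem m A), good K L & pairCC K L].
  apply: IH.
  - by rewrite size_rem // Hs.
  - by rewrite !size_rem // -hsz.
  - by move=> p /mem_rem /hP.
  move=> v; rewrite (count_rem_eq _ hmA) (count_rem_eq _ hJP).
  case: (leqP m v) => hv.
    have e1 : (nth 0 J K.-1 < v) = true by apply/idP; lia.
    have e2 : (m <= v) = true by apply/idP; lia.
    rewrite e1; exact: leq_sub2r _ (hH v).
  rewrite (_ : count _ A = 0) //.
  apply/eqP; rewrite -leqn0 leqNgt -has_count; apply/hasPn => y /hmin /=; lia.
have sJ := hP _ hJP.
set X := rcons J m.
have hXt : take K X = J by rewrite /X -cats1 take_size_cat.
have hXK : nth 0 X K = m by rewrite /X nth_rcons sJ ltnn eqxx.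
have hXl : forall l, l < K -> nth 0 X l = nth 0 J l by move=> l hl; rewrite /X nth_rcons sJ hl.
exists (X :: L0); split.
- rewrite /= hXt; apply: perm_trans (_ : perm_eq (J :: rem J P) P); first by rewrite perm_cons.
  by rewrite perm_sym; apply: perm_to_rem.
- rewrite /= hXK; apply: perm_trans (_ : perm_eq (m :: rem m A) A); first by rewrite perm_cons.
  by rewrite perm_sym; apply: perm_to_rem.
- move=> I; rewrite inE => /orP [/eqP ->|/h3 //].
  by rewrite /X size_rcons sJ hXK hXl //; lia.
have hL0K : forall I, I \in L0 -> m <= nth 0 I K.
  move=> I hI; apply: hmin; apply: (mem_rem (x := m)).
  by rewrite -(perm_mem h2); apply: (map_f (fun I => nth 0 I K)).
have hL0P : forall I, I \in L0 -> take K I \in P.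
  move=> I hI; apply: (mem_rem (x := J)).
  by rewrite -(perm_mem h1); apply: map_f.
have hL0s : forall I, I \in L0 -> size I = K.+1 by move=> I /h3 [].
have nprec : forall I, I \in L0 -> prec K X I -> m <= nth 0 I K.-1.
  move=> I hI hpr; rewrite leqNgt; apply/negP => hlt.
  apply: (hJmax (take K I)).
    by rewrite mem_filter nth_take ?hlt ?hL0P //; lia.
  apply: prec_ext hpr => l hl; rewrite ?hXl ?nth_take //.
move=> I J'; rewrite !inE => /orP [/eqP ->|hI] /orP [/eqP ->|hJ'].
- by move/prec_irr.
- move=> hpr; left; rewrite hXK; exact: nprec hJ' hpr.
- move=> _; right; rewrite hXK; exact: hL0K.
- exact: h4.
Qed.

Lemma nc_CC K I J : 1 <= K -> (forall a, a < K -> nth 0 J a <= nth 0 J K.-1) ->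
  noncrossing K.+1 I J -> CC K I J.
Proof.
move=> hK hJs hnc [a [ha hagr hlt]].
case: (leqP (nth 0 I K) (nth 0 J K.-1)) => h1; first by left.
case: (leqP (nth 0 J K) (nth 0 I K)) => h2; first by right.
exfalso; have := hnc a K ha (ltnSn K) hagr; rewrite /arcs_cross.
have := hJs a ha; lia.
Qed.

Lemma nc_take K I J : noncrossing K.+1 I J -> noncrossing K (take K I) (take K J).
Proof.
move=> h a b hab hb hagr.
have ha : a < K by lia.
rewrite !nth_take //; apply: h => //; first by lia.
move=> l h1 h2; have hl : l < K by lia.
by have := hagr l h1 h2; rewrite !nth_take.
Qed.

Lemma nc_build K I J : 1 <= K -> noncrossing K (take K I) (take K J) -> CC K I J -> CC K J I ->
  nth 0 I K.-1 < nth 0 I K -> nth 0 J K.-1 < nth 0 J K -> noncrossing K.+1 I J.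
Proof.
move=> hK h c1 c2 hI hJ a b hab hb hagr.
have ha : a < K by lia.
case: (ltnP b K) => hbK.
  have := h a b hab hbK; rewrite !nth_take //; apply => l h1 h2.
  have hl : l < K by lia.
  by rewrite !nth_take // hagr.
have eb : b = K by lia.
subst b; rewrite /arcs_cross.
case: (ltngtP (nth 0 I a) (nth 0 J a)) => hc.
- have hp : prec K I J by exists a.
  case: (c1 hp) => h1; last by lia.
  case: (ltnP a K.-1) => ha'.
    have := hagr K.-1 ha' ltac:(lia); lia.
  have -> : a = K.-1 by lia.
  lia.
- have hp : prec K J I by exists a; split => // l h1 h2; rewrite hagr.
  case: (c2 hp) => h1; last by lia.
  case: (ltnP a K.-1) => ha'.
    have := hagr K.-1 ha' ltac:(lia); lia.
  have -> : a = K.-1 by lia.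
  lia.
- lia.
Qed.

Lemma inVstar_take K n I : 1 <= K -> inVstar K.+1 n I -> inVstar K (n - 1) (take K I).
Proof.
move=> hK /andP [hI hne].
have [hs ho hb] := (inV_P _ _ _).1 hI.
have hnK := inV_bounds hI (ltnSn K).
have hsz : size (take K I) = K by rewrite size_takel // hs.
apply/andP; split.
  apply/inV_P; split => //.
    by move=> i j hij hj; rewrite !nth_take //; [apply: ho; lia| lia].
  move=> i hi; rewrite nth_take //.
  have := hb i ltac:(lia); have := ho i K hi (ltnSn K); have := hb K (ltnSn K); lia.
apply/negP => /eqP he; move/negP: hne; apply; apply/eqP.
apply: (@eq_from_nth _ 0); first by rewrite hs size_iota.
rewrite hs => i hi; rewrite nth_iota //.
case: (ltnP i K) => hiK.
  have := nth_take 0 hiK I; rewrite he nth_iota // => <-; lia.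
have ei : i = K by lia. subst i.
have hK1 : K.-1 < K by lia.
have := nth_take 0 hK1 I; rewrite he nth_iota // => e.
have := ho K.-1 K hK1 (ltnSn K); lia.
Qed.

Lemma inVstar_build K n I : 1 <= K -> inVstar K (n - 1) (take K I) -> size I = K.+1 ->
  nth 0 I K.-1 < nth 0 I K -> nth 0 I K <= n -> inVstar K.+1 n I.
Proof.
move=> hK /andP [hI hne] hs hlt hn.
have [hs' ho hb] := (inV_P _ _ _).1 hI.
have eT : forall i, i < K -> nth 0 (take K I) i = nth 0 I i by move=> i hi; rewrite nth_take.
have hK1 : K.-1 < K by lia.
have hbK := inV_bounds hI hK1.
rewrite eT // in hbK.
have hle : forall i, i < K -> nth 0 I i <= nth 0 I K.-1.
  move=> i hi; case: (ltnP i K.-1) => h.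
    by have := ho i K.-1 h hK1; rewrite !eT //; lia.
  by have -> : i = K.-1 by lia.
apply/andP; split.
  apply/inV_P; split => //.
    move=> i j hij hj; case: (ltnP j K) => hjK.
      by have := ho i j hij hjK; rewrite !eT //; lia.
    have -> : j = K by lia.
    have := hle i ltac:(lia); lia.
  move=> i hi; case: (ltnP i K) => hiK.
    by have := hb i hiK; rewrite eT //; lia.
  have -> : i = K by lia.
  lia.
apply/negP => /eqP he; move/negP: hne; apply; apply/eqP.
rewrite he take_iota (_ : minn K K.+1 = K); last by lia.
congr iota; lia.
Qed.

Lemma rep_take K n T L : 1 <= K ->
  represents (noncrossing K.+1) K.+1 n T L -> represents (noncrossing K) K (n - 1) T (map (take K) L).
Proof.
move=> hK [hL hnc hsum]; split.
- apply/allP => p /mapP [I hI ->]; apply: inVstar_take => //; exact: (allP hL).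
- move=> p q /mapP [I hI ->] /mapP [J hJ ->]; apply: nc_take; exact: hnc.
- move=> a b ha hb; rewrite -hsum; [|lia|lia].
  rewrite /summing_tableau count_map; apply: eq_count => I /=; rewrite nth_take //.
Qed.

Lemma good_of_rep K n T L : represents (noncrossing K.+1) K.+1 n T L -> 1 <= K -> good K L.
Proof.
move=> [hL _ _] hK I /(allP hL) /andP [hI _]; have [hs ho _] := (inV_P _ _ _).1 hI.
split => //; apply: ho; lia.
Qed.

Lemma pairCC_of_rep K n T L : represents (noncrossing K.+1) K.+1 n T L -> 1 <= K -> pairCC K L.
Proof.
move=> [hL hnc _] hK I J hI hJ; apply: nc_CC => //; last exact: hnc.
move=> a ha; move/(allP hL): hJ => /andP [hJ' _]; have [hs ho _] := (inV_P _ _ _).1 hJ'.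
case: (ltnP a K.-1) => h; first by apply: ltnW; apply: ho; lia.
by have -> : a = K.-1 by lia.
Qed.

Lemma NC_main k : 1 <= k -> forall n T, k < n -> is_tableau k n T ->
  exists_unique_multiset (represents (noncrossing k) k n T).
Proof.
elim: k => [//|K IH] _ n T hkn hT.
case: (posnP K) => hK0.
  subst K.
  have nc1 : forall I J, noncrossing 1 I J by move=> I J a b hab hb; lia.
  have nn1 : forall I J, nonnesting 1 I J by move=> I J a b hab hb; lia.
  exists (canon T 1 n); split.
    by case: (canon_rep (leqnn 1) hkn hT) => h1 h2 h3; split.
  move=> L' [h1 h2 h3]; apply: canon_uniq => //; split => //.
have hK : 1 <= K by lia.
have hT' : is_tableau K (n - 1) T.
  case: hT => hr hc; split.
    move=> a b ha hb; apply: hr; lia.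
  move=> a b ha hb; apply: hc; lia.
have [P [[hP1 hP2 hP3] hPu]] := IH hK (n - 1) T ltac:(lia) hT'.
set C := canon T K.+1 n.
have [hC1 hC2 hC3] := canon_rep (ltn0Sn K) hkn hT.
set A := map (fun I => nth 0 I K) C.
have hszC := size_sum (ltn0Sn K) hkn hC1 hC3.
have hKn1 : K < n - 1 by lia.
have hszP := size_sum hK hKn1 hP1 hP3.
have [L [h1 h2 h3 h4]] : exists L, [/\ perm_eq (map (take K) L) P,
    perm_eq (map (fun I => nth 0 I K) L) A, good K L & pairCC K L].
  apply: NC_exist_step => //.
  - rewrite size_map hszC hszP; congr T; lia.
  - by move=> p /(allP hP1) /andP [/inV_P []].
  move=> v; rewrite count_map (cnt_ext _ hkn hC1 hC3 (ltnSn K)).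
  case: v => [|v]; first by rewrite /ext leq0n.
  rewrite (@eq_count _ _ (fun p => nth 0 p K.-1 <= v)); last by move=> p /=; rewrite ltnS.
  have hK1 : K.-1 < K by lia.
  rewrite (cnt_ext _ hKn1 hP1 hP3 hK1) /ext.
  have e1 : (v.+1 <= K) = (v <= K.-1) by lia.
  have e2 : v.+1 - K.+1 = v - K.-1.+1 by lia.
  have e3 : n - K.+1 = n - 1 - K by lia.
  rewrite e1 e2 e3; case: ifP => // _; case: ifP => hb.
    apply: (tab_col hT); lia.
  by rewrite hszC hszP; have -> : n - K.+1 - 1 = n - 1 - K - 1 by lia.
have hrep : represents (noncrossing K.+1) K.+1 n T L.
  have htP : forall I, I \in L -> take K I \in P.
    by move=> I hI; rewrite -(perm_mem h1); apply: map_f.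
  split.
  - apply/allP => I hI; have [hs hlt] := h3 I hI.
    apply: inVstar_build => //; first exact: (allP hP1) _ (htP _ hI).
    have : nth 0 I K \in A by rewrite -(perm_mem h2); apply: (map_f (fun I => nth 0 I K)).
    case/mapP => J hJ ->; move/(allP hC1): hJ => /andP [hJ _].
    have := inV_bounds hJ (ltnSn K); lia.
  - move=> I J hI hJ; apply: nc_build => //.
    + exact: hP2 _ _ (htP _ hI) (htP _ hJ).
    + exact: h4.
    + exact: h4.
    + by case: (h3 I hI).
    + by case: (h3 J hJ).
  - move=> a b ha hb; case: (ltnP a K) => haK.
      rewrite -hP3 //; last by lia.
      rewrite /summing_tableau -(permP h1) count_map; apply: eq_count => I /=.
      by rewrite nth_take.
    have -> : a = K by lia.
    rewrite -hC3 // /summing_tableau.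
    have := permP h2 (fun x => x <= K + b + 1); rewrite /A !count_map => <-.
    by [].
exists L; split => // L' hL'.
apply: (NC_uniq_step hK) => //.
- exact: good_of_rep hL' hK.
- exact: pairCC_of_rep hL' hK.
- have := hPu _ (rep_take hK hL'); exact: perm_trans h1.
- move=> v; case: hL' => hL' _ hs'; case: hrep => hL _ hs.
  rewrite (cnt_ext _ hkn hL hs (ltnSn K)) (cnt_ext _ hkn hL' hs' (ltnSn K)).
  by rewrite (size_sum (ltn0Sn K) hkn hL hs) (size_sum (ltn0Sn K) hkn hL' hs').
Qed.

Theorem theorem2p3 (k n : nat) (T : nat -> nat -> nat) :
  1 <= k -> k <= n - 1 -> is_tableau k n T ->
  exists_unique_multiset (represents (nonnesting k) k n T) /\
  exists_unique_multiset (represents (noncrossing k) k n T).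
Proof.
move=> hk hkn hT.
have hkn' : k < n by lia.
split; last exact: NC_main.
exists (canon T k n); split; first exact: canon_rep.
by move=> L'; apply: canon_uniq.
Qed.
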